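(* Let $p\geq3$ be prime. Then in $\mathbb{L}_p$, \[\left(\sum_{l=0}^{p-1}\frac{(-1)^l}{l!}\zeta_{2(p-1)}^l p^{\frac{l}{p-1}}\right)^p-1=O\left(p^{2+\frac{1}{p-1}}\right).\]
   Context: $\mathbb{L}_p$ is the $p$-adic Mal'cev–Neumann field of formal sums $\sum_{x\in\mathbb{Q}}[\alpha_x]p^x$ ($\alpha_x\in\bar{\mathbb{F}}_p$, $[\cdot]$ Teichmüller lift, well-ordered support), containing $\mathbb{Q}_p$, valuation $v_p$ = minimum of support; $p^x$ is the element with support $\{x\}$ and coefficient $1$. $\zeta_{2(p-1)}$ is (the Teichmüller lift of) a fixed primitive $2(p-1)$-th root of unity in $\bar{\mathbb{F}}_p$; $l!$ is the ordinary factorial. $\alpha=O(p^x)$ means $v_p(\alpha)\geq x$. *)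

(* Defs.v *)
From HB Require Import structures.
From mathcomp Require Import all_boot all_order all_algebra.
Set Implicit Arguments. Unset Strict Implicit. Unset Printing Implicit Defensive.
Import Order.TTheory GRing.Theory Num.Theory.
Local Open Scope ring_scope.

(* p-adic valuation on the rationals (value for q = 0 is irrelevant). *)
Definition padic_val_rat (p : nat) (q : rat) : int :=
  (logn p `|numq q|)%:Z - (logn p `|denq q|)%:Z.

(* v : K -> rat is a (rank-one, Q-valued) valuation on the nonzero elements
   of K which restricts to v_p on Q.  v 0 is meaningless (stands for +oo). *)
Record pvaluation (p : nat) (K : fieldType) (v : K -> rat) : Prop := {
  pval_mul : forall x y, x != 0 -> y != 0 -> v (x * y) = v x + v y;
  pval_add : forall x y, x != 0 -> y != 0 -> x + y != 0 ->
               Num.min (v x) (v y) <= v (x + y);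
  pval_rat : forall q : rat, q != 0 -> v (ratr q) = (padic_val_rat p q)%:~R
}.

(* alpha = O(p^x)  :<=>  v(alpha) >= x  (with v(0) = +oo). *)
Definition bigOp (K : fieldType) (v : K -> rat) (a : K) (x : rat) : Prop :=
  a = 0 \/ x <= v a.

(* Main.v *)
Require Import Defs.
From HB Require Import structures.
From mathcomp Require Import all_boot all_order all_algebra.
From mathcomp Require Import ring lra zify.
Import Order.TTheory GRing.Theory Num.Theory.
Local Open Scope ring_scope.
Set Implicit Arguments. Unset Strict Implicit.

Lemma v_nat (p : nat) (K : fieldType) (v : K -> rat) :
  [pchar K] =i pred0 -> pvaluation p v -> forall n : nat, (0 < n)%N ->
  v (n%:R) = (logn p n)%:R.
Proof.
move=> ch Hv n n0.
have nq : (n%:R : rat) != 0 by rewrite pnatr_eq0 -lt0n.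
have := pval_rat Hv nq; rewrite ratr_nat => ->.
have -> : (n%:R : rat) = (n%:Z)%:~R by [].
rewrite /padic_val_rat numq_int denq_int absz_nat logn1 subr0.
by rewrite pmulrn.
Qed.

Lemma v_one (p : nat) (K : fieldType) (v : K -> rat) :
  [pchar K] =i pred0 -> pvaluation p v -> v 1 = 0.
Proof. by move=> ch Hv; have := v_nat ch Hv (ltn0Sn 0); rewrite logn1. Qed.

Lemma v_inv (p : nat) (K : fieldType) (v : K -> rat) :
  [pchar K] =i pred0 -> pvaluation p v -> forall y, y != 0 -> v y^-1 = - v y.
Proof.
move=> ch Hv y y0.
have := pval_mul Hv y0 (invr_neq0 y0); rewrite mulfV // (v_one ch Hv) => h.
lra.
Qed.

Lemma v_exp (p : nat) (K : fieldType) (v : K -> rat) :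
  pvaluation p v -> forall y, y != 0 -> forall n, v (y ^+ n.+1) = n.+1%:R * v y.
Proof.
move=> Hv y y0; elim=> [|n IH]; first by rewrite expr1 mul1r.
rewrite exprS (pval_mul Hv y0) ?expf_neq0 // IH -addn1 natrD; ring.
Qed.

Lemma v_opp (p : nat) (K : fieldType) (v : K -> rat) :
  [pchar K] =i pred0 -> pvaluation p v -> forall y, y != 0 -> v (- y) = v y.
Proof.
move=> ch Hv y y0.
have m0 : (-1 : K) != 0 by rewrite oppr_eq0 oner_eq0.
have h1 : v (-1) = 0.
  have := pval_mul Hv m0 m0; rewrite mulrNN mulr1 (v_one ch Hv) => h.
  have : 2%:R * v (-1) = 0 by rewrite h; ring.
  by move/eqP; rewrite mulf_eq0 pnatr_eq0 /= => /eqP.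
by rewrite -mulN1r (pval_mul Hv m0 y0) h1 add0r.
Qed.


Lemma bigOp0 (K : fieldType) (v : K -> rat) r : bigOp v 0 r.
Proof. by left. Qed.

Lemma bigOp_le (K : fieldType) (v : K -> rat) a r s :
  bigOp v a r -> s <= r -> bigOp v a s.
Proof. by move=> [->|h] sr; [left|right; apply: le_trans h]. Qed.

Lemma bigOpD (p : nat) (K : fieldType) (v : K -> rat) a b r :
  pvaluation p v -> bigOp v a r -> bigOp v b r -> bigOp v (a + b) r.
Proof.
move=> Hv [->|ha]; first by rewrite add0r.
move=> [->|hb]; first by rewrite addr0; right.
have [->|a0] := eqVneq a 0; first by rewrite add0r; right.
have [->|b0] := eqVneq b 0; first by rewrite addr0; right.
have [->|ab0] := eqVneq (a + b) 0; first by left.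
right; apply: le_trans (pval_add Hv a0 b0 ab0).
by rewrite le_min ha hb.
Qed.

Lemma bigOpM (p : nat) (K : fieldType) (v : K -> rat) a b r s :
  pvaluation p v -> bigOp v a r -> bigOp v b s -> bigOp v (a * b) (r + s).
Proof.
move=> Hv [->|ha]; first by rewrite mul0r; left.
move=> [->|hb]; first by rewrite mulr0; left.
have [->|a0] := eqVneq a 0; first by rewrite mul0r; left.
have [->|b0] := eqVneq b 0; first by rewrite mulr0; left.
by right; rewrite (pval_mul Hv a0 b0) lerD.
Qed.

Lemma bigOp_sum (p : nat) (K : fieldType) (v : K -> rat) (I : Type) (s : seq I)
   (P : pred I) (F : I -> K) r :
  pvaluation p v -> (forall i, P i -> bigOp v (F i) r) ->
  bigOp v (\sum_(i <- s | P i) F i) r.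
Proof.
move=> Hv h; apply: (big_ind (fun y => bigOp v y r)) => [|x y hx hy|i Pi].
- by left.
- exact: bigOpD Hv hx hy.
- exact: h.
Qed.

Lemma bigOpN (p : nat) (K : fieldType) (v : K -> rat) a r :
  [pchar K] =i pred0 -> pvaluation p v -> bigOp v a r -> bigOp v (- a) r.
Proof.
move=> ch Hv [->|h]; first by rewrite oppr0; left.
have [->|a0] := eqVneq a 0; first by rewrite oppr0; left.
by right; rewrite (v_opp ch Hv a0).
Qed.

Lemma bigOp_exp (p : nat) (K : fieldType) (v : K -> rat) y r :
  [pchar K] =i pred0 -> pvaluation p v -> bigOp v y r ->
  forall n, bigOp v (y ^+ n) (n%:R * r).
Proof.
move=> ch Hv hy; elim=> [|n IH].
  by rewrite expr0 mul0r; right; rewrite (v_one ch Hv).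
rewrite exprS; apply: bigOp_le (bigOpM Hv hy IH) _.
by rewrite -addn1 natrD mulrDl mul1r addrC lexx.
Qed.

Lemma bigOp_nat (p : nat) (K : fieldType) (v : K -> rat) n :
  [pchar K] =i pred0 -> pvaluation p v -> bigOp v (n%:R) 0.
Proof.
move=> ch Hv; case: n => [|n]; first by left.
by right; rewrite (v_nat ch Hv) // ler0n.
Qed.

Lemma v_nat_coprime (p : nat) (K : fieldType) (v : K -> rat) n :
  [pchar K] =i pred0 -> pvaluation p v -> prime p -> (0 < n)%N -> ~~ (p %| n)%N ->
  v (n%:R) = 0.
Proof.
move=> ch Hv pr n0 nd.
by rewrite (v_nat ch Hv n0) logn_coprime // prime_coprime.
Qed.

Lemma bigOp_inv_coprime (p : nat) (K : fieldType) (v : K -> rat) n :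
  [pchar K] =i pred0 -> pvaluation p v -> prime p -> (0 < n)%N -> ~~ (p %| n)%N ->
  bigOp v (n%:R)^-1 0.
Proof.
move=> ch Hv pr n0 nd; right.
have nz : (n%:R : K) != 0 by rewrite (pcharf0P K).1 // -lt0n.
by rewrite (v_inv ch Hv nz) (v_nat_coprime ch Hv pr n0 nd) oppr0.
Qed.

Lemma notdvd_fact p l : prime p -> (l < p)%N -> ~~ (p %| l`!)%N.
Proof.
move=> pr; elim: l => [|l IH] hl.
  by rewrite fact0 dvdn1; apply/eqP => e; move: pr; rewrite e.
rewrite factS Euclid_dvdM // negb_or IH ?(ltnW hl) // andbT.
by rewrite gtnNdvd.
Qed.

Lemma intg_polyM (p : nat) (K : fieldType) (v : K -> rat) (a b : {poly K}) :
  pvaluation p v -> (forall i, bigOp v a`_i 0) -> (forall i, bigOp v b`_i 0) ->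
  forall i, bigOp v (a * b)`_i 0.
Proof.
move=> Hv ha hb i; rewrite coefM; apply: (bigOp_sum _ Hv) => j _.
by apply: bigOp_le (bigOpM Hv (ha _) (hb _)) _; rewrite addr0.
Qed.

Lemma intg_polyX (p : nat) (K : fieldType) (v : K -> rat) (a : {poly K}) :
  [pchar K] =i pred0 -> pvaluation p v -> (forall i, bigOp v a`_i 0) ->
  forall n i, bigOp v (a ^+ n)`_i 0.
Proof.
move=> ch Hv ha; elim=> [|n IH] i.
  by rewrite expr0 coef1; apply: bigOp_nat ch Hv.
by rewrite exprS; apply: intg_polyM Hv ha IH i.
Qed.

Unset Implicit Arguments.

Theorem proposition3p16 (p : nat) (K : fieldType) (v : K -> rat)
  (zeta pi : K) :
  prime p -> (3 <= p)%N ->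
  [pchar K] =i pred0 ->
  pvaluation p v ->
  (2 * (p - 1))%N.-primitive_root zeta ->
  pi ^+ (p - 1) = p%:R ->
  bigOp v ((\sum_(l < p) (-1) ^+ l / (l`!)%:R * zeta ^+ l * pi ^+ l) ^+ p - 1)
        (2 + ((p - 1)%:R)^-1).
Proof.
move=> pr p3 ch Hv hz hpi.
have nz n : (0 < n)%N -> (n%:R : K) != 0 by move=> n0; rewrite (pcharf0P K).1 // -lt0n.
have p0 : (0 < p)%N by apply: prime_gt0.
have hp1 : p = p.-1.+1 by rewrite prednK.
have p1 : (p - 1)%N = p.-1 by rewrite subn1.
rewrite p1 in hz hpi *.
have vp : v p%:R = 1 by rewrite (v_nat ch Hv p0) logn_prime // eqxx.
have bp : bigOp v (p%:R : K) 1 by right; rewrite vp.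
have vfact l : (l < p)%N -> v (l`!%:R : K) = 0.
  by move=> hl; rewrite (v_nat_coprime ch Hv pr (fact_gt0 l)) // notdvd_fact.
have bfact l : (l < p)%N -> bigOp v (l`!%:R : K)^-1 0.
  by move=> hl; apply: (bigOp_inv_coprime ch Hv pr (fact_gt0 l)); rewrite notdvd_fact.
pose T : {poly K} := \poly_(l < p) (l`!%:R)^-1.
pose c k := (T ^+ p)`_k.
pose D := T ^+ p.-1.
pose cf : K := (p.-1`!%:R)^-1.
have intgT i : bigOp v T`_i 0.
  rewrite coef_poly; case: ifP => hi; [exact: bfact|by left].
have intgc k : bigOp v (c k) 0 by exact: (intg_polyX ch Hv intgT).
have intgD k : bigOp v (D`_k) 0 by exact: (intg_polyX ch Hv intgT).
have intgcf : bigOp v cf 0 by apply: bfact; rewrite hp1.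
have dT : T^`() = T - cf *: 'X^(p.-1).
  apply/polyP => i; rewrite coef_deriv coefB coefZ coefXn !coef_poly.
  have [hi|hi|hi] := ltngtP i.+1 p.
  - have -> : (i == p.-1) = false by apply/negbTE; rewrite neq_ltn -ltnS -hp1 hi.
    rewrite mulr0 subr0 factS natrM -mulr_natr; field.
    by rewrite nz ?fact_gt0 // addrC natr1 nz.
  - have -> : (i == p.-1) = false.
      by apply/negbTE; rewrite neq_ltn; apply/orP; right; rewrite -ltnS -hp1.
    by rewrite mul0rn mulr0 subr0.
  - by rewrite /cf -hi /= eqxx mulr1 subrr mul0rn.
have dP : (T ^+ p)^`() = (T ^+ p - cf *: ('X^(p.-1) * D)) *+ p.
  by rewrite deriv_exp dT mulrBl -exprS prednK // scalerAl.
have Rec k : c k.+1 * k.+1%:R = p%:R * (c k - cf * (if (k < p.-1)%N then 0 else D`_(k - p.-1))).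
  have := congr1 (fun q : {poly K} => q`_k) dP.
  rewrite coef_deriv coefMn coefB coefZ coefXnM => h.
  by rewrite /c mulr_natr h mulr_natl.
have T0 : T`_0 = 1 by rewrite coef_poly p0 fact0 invr1.
have c0 : c 0 = 1 by rewrite /c -horner_coef0 horner_exp horner_coef0 T0 expr1n.
have D0 : D`_0 = 1 by rewrite /D -horner_coef0 horner_exp horner_coef0 T0 expr1n.
have cexact k : (k < p)%N -> c k = p%:R ^+ k / k`!%:R.
  elim: k => [|k IH] hk; first by rewrite c0 expr0 fact0 invr1 mulr1.
  have hk' : (k < p.-1)%N by rewrite -ltnS -hp1.
  have := Rec k; rewrite hk' mulr0 subr0 IH ?(ltnW hk) // => h.
  apply: (mulIf (nz _ (ltn0Sn k))); rewrite h factS natrM exprS; field.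
  by rewrite nz ?fact_gt0 // addrC natr1 nz.
have cp : c p = (p%:R ^+ p.-1 - 1) * cf.
  have := Rec p.-1; rewrite ltnn subnn D0 mulr1 -hp1 (cexact p.-1); last by rewrite {2}hp1.
  move=> h; apply: (mulIf (nz _ p0)); rewrite h /cf; field.
  by rewrite nz ?fact_gt0.
have cdiv k : ~~ (p %| k.+1)%N -> bigOp v (c k.+1) 1.
  move=> nd.
  have -> : c k.+1 = p%:R * (c k - cf * (if (k < p.-1)%N then 0 else D`_(k - p.-1))) * (k.+1%:R)^-1.
    by rewrite -Rec mulfK // nz.
  have h1 : bigOp v (c k - cf * (if (k < p.-1)%N then 0 else D`_(k - p.-1))) 0.
    apply: (bigOpD Hv (intgc k)); apply: (bigOpN ch Hv).
    apply: bigOp_le (bigOpM Hv intgcf (_ : bigOp v (if (k < p.-1)%N then 0 else D`_(k - p.-1)) 0)) _.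
      by case: ifP => _; [left|apply: intgD].
    by rewrite addr0.
  have h2 := bigOp_inv_coprime ch Hv pr (ltn0Sn k) nd.
  by apply: bigOp_le (bigOpM Hv (bigOpM Hv bp h1) h2) _; rewrite !addr0.
have zp : zeta ^+ p.-1 = -1.
  have := prim_expr_order hz; rewrite mulnC exprM => /eqP; rewrite sqrf_eq1.
  case/orP => /eqP // h.
  have hd : (2 * p.-1 %| p.-1)%N = false by apply: gtnNdvd; lia.
  by have := prim_order_dvd hz p.-1; rewrite hd h eqxx.
have odd_p : odd p by case: (even_prime pr) => [e|//]; move: p3; rewrite e.
have sgn : (-1 : K) ^+ p.-1 = 1.
  by rewrite -signr_odd; move: odd_p; rewrite hp1 /= => /negbTE ->; rewrite expr0.
pose x := - zeta * pi.
have xp : x ^+ p.-1 = - p%:R by rewrite /x exprMn exprNn zp sgn hpi mul1r mulN1r.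
have pK0 : (p%:R : K) != 0 by exact: nz.
have x0 : x != 0.
  apply/eqP => e; move: xp; rewrite e expr0n; case: eqP => [|_]; first lia.
  by move/eqP; rewrite eq_sym oppr_eq0 (negbTE pK0).
have vx : p.-1%:R * v x = 1.
  have := v_exp Hv x0 (p.-2); rewrite (_ : p.-2.+1 = p.-1); last lia.
  by rewrite xp (v_opp ch Hv pK0) vp.
pose e := v x.
have einv : (p.-1%:R)^-1 = e.
  have nzp : (p.-1%:R : rat) != 0 by rewrite pnatr_eq0; lia.
  by apply: (mulfI nzp); rewrite vx mulfV.
have pe : (p%:R - 1) * e = 1 by move: vx; rewrite -subn1 natrB.
have p3r : (3 : rat) <= p%:R by rewrite (ler_nat _ 3 p).
have e0 : 0 < e by nra.
have bx : bigOp v x e by right.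
have bxk k : bigOp v (x ^+ k) (k%:R * e) := bigOp_exp ch Hv bx k.
rewrite einv.
have -> : \sum_(l < p) (-1) ^+ l / l`!%:R * zeta ^+ l * pi ^+ l = T.[x].
  rewrite horner_poly; apply: eq_bigr => l _; rewrite /x exprMn (exprNn zeta) -!mulrA mulrCA [LHS]mulrCA; congr (_ * _); exact: mulrCA.
have hE : T.[x] ^+ p = (T ^+ p).[x] by rewrite horner_exp.
rewrite hE (horner_coef_wide (n := p * p)); last first.
  apply: leq_trans (size_poly_exp_leq _ _) _.
  have sT : (size T <= p)%N := size_poly _ _.
  move: sT; set s := size T => sT; nia.
rewrite -(big_mkord xpredT (fun i => (T ^+ p)`_i * x ^+ i)).
have pp1 : (1 < p * p)%N by nia.
rewrite (@big_ltn K 0 +%R 0) ?(ltnW pp1) // (@big_ltn K 0 +%R 1) //.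
rewrite (big_cat_nat _ (n := p)) //=; last by nia.
rewrite (@big_ltn K 0 +%R p); last by nia.
rewrite -/(c 0) c0 expr0 mulr1.
have key (a b d f : K) : 1 + (a + (b + (d + f))) - 1 = (a + d) + b + f by ring.
rewrite key.
apply: (bigOpD Hv); first apply: (bigOpD Hv).
-
  have xp1 : x ^+ p = - p%:R * x by rewrite {1}hp1 exprSr xp.
  have W := Wilson (prime_gt1 pr); rewrite pr in W.
  case/dvdnP: (esym W) => m hm.
  have c1 : c 1 = p%:R by rewrite cexact ?expr1 ?fact1 ?invr1 ?mulr1 //; lia.
  have hF : ((p.-1)`!%:R : K) = m%:R * p%:R - 1.
    by rewrite -natrM -hm -addn1 natrD addrK.
  have hP : (p%:R : K) ^+ p.-1 = p%:R * (p ^ p.-2)%:R.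
    by rewrite -natrX -natrM -expnS (_ : p.-2.+1 = p.-1) //; lia.
  have -> : (T ^+ p)`_1 * x ^+ 1 + (T ^+ p)`_p * x ^+ p
      = p%:R * p%:R * x * cf * (m%:R - (p ^ p.-2)%:R).
    rewrite -/(c 1) -/(c p) c1 cp xp1 /cf hP hF expr1; field.
    by rewrite -hF nz ?fact_gt0.
  have hm' : bigOp v ((m%:R : K) - (p ^ p.-2)%:R) 0.
    exact: (bigOpD Hv (bigOp_nat m ch Hv) (bigOpN ch Hv (bigOp_nat (p ^ p.-2) ch Hv))).
  apply: bigOp_le (bigOpM Hv (bigOpM Hv (bigOpM Hv (bigOpM Hv bp bp) bx) intgcf) hm') _.
  by rewrite !addr0.
- rewrite big_nat_cond; apply: (bigOp_sum _ Hv) => i /andP [/andP [hi1 hi2] _].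
  rewrite -/(c i) (cexact i hi2).
  have := bigOpM Hv (bigOpM Hv (bigOp_exp ch Hv bp i) (bfact i hi2)) (bxk i).
  move/bigOp_le; apply.
  have hi : (2 : rat) <= i%:R by rewrite (ler_nat _ 2 i).
  rewrite mulr1 addr0; nra.
- rewrite big_nat_cond; apply: (bigOp_sum _ Hv) => i /andP [/andP [hi1 hi2] _].
  have hir : (p%:R + 1 : rat) <= i%:R by rewrite natr1 ler_nat.
  case: (boolP (p %| i)%N) => hd.
    have hi2p : (2 * p <= i)%N.
      case/dvdnP: hd hi1 => m ->; case: m => [|[|m]] /=; [by rewrite mul0n|by rewrite mul1n ltnn|move=> _; nia].
    have hir2 : (2 * p%:R : rat) <= i%:R by rewrite -natrM ler_nat.
    apply: bigOp_le (bigOpM Hv (intgc i) (bxk i)) _.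
    rewrite add0r; nra.
  + have hi0 : i = i.-1.+1 by rewrite prednK //; lia.
    have hc : bigOp v (c i) 1 by rewrite hi0; apply: cdiv; rewrite -hi0.
    apply: bigOp_le (bigOpM Hv hc (bxk i)) _.
    nra.
lia.
Qed.
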